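(* Let $k\ge 2$ and let $\mathcal{C}$ be the full flag code on $\mathbb{F}_q^{2k}$ constructed from a $k$-spread as described in the context. Let $\mathcal{F}=(\mathcal{F}_1,\ldots,\mathcal{F}_{2k-1})\in\mathcal{C}$ and let $\mathcal{X}=(\mathcal{X}_1,\ldots,\mathcal{X}_{2k-1})$ be a sequence of subspaces with $\mathcal{X}_i\subseteq\mathcal{F}_i$ for all $i$ and $\mathcal{X}_1=\cdots=\mathcal{X}_k=\{0\}$. Suppose there is $i\in\{k+1,\ldots,2k-1\}$ with $\dim\mathcal{X}_i>2(i-k)$, and let $i$ be the minimum such index. Then $\mathcal{F}$ is the unique flag $\mathcal{G}=(\mathcal{G}_1,\ldots,\mathcal{G}_{2k-1})\in\mathcal{C}$ with $\mathcal{X}_i\subseteq\mathcal{G}_i$.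
   Context: $q$ is a prime power. Construction: let $\{\mathcal{S}_1,\ldots,\mathcal{S}_{q^k+1}\}$ be a $k$-spread of $\mathbb{F}_q^{2k}$ (a set of $q^k+1$ $k$-dimensional subspaces pairwise intersecting trivially), with full-rank $k\times 2k$ generator matrices $\mathrm{S}_i$ (row space $\mathcal{S}_i$). Let $\mathrm{W}_i=\begin{pmatrix}\mathrm{S}_i\\ \mathrm{S}_{i+1}\end{pmatrix}$ for $i\le q^k$ and $\mathrm{W}_{q^k+1}=\begin{pmatrix}\mathrm{S}_{q^k+1}\\ \mathrm{S}_1\end{pmatrix}$, let $\mathcal{W}_i^{(j)}$ be the row space of the first $j$ rows of $\mathrm{W}_i$, and $\mathcal{C}=\{(\mathcal{W}_i^{(1)},\ldots,\mathcal{W}_i^{(2k-1)}): 1\le i\le q^k+1\}$. *)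

(* Defs.v *)
From HB Require Import structures.
From mathcomp Require Import all_boot all_order all_algebra.
Set Implicit Arguments.
Unset Strict Implicit.
Unset Printing Implicit Defensive.
Import GRing.Theory.
Local Open Scope ring_scope.

(* Subspaces of F^n are represented (mxalgebra style) as row spaces of
   matrices with n columns.  The field F_q is a finite field F, q = #|F|. *)

Definition is_spread (F : finFieldType) (k : nat)
  (S : 'I_(#|F| ^ k).+1 -> 'M[F]_(k, k + k)) : Prop :=
  (forall i, row_free (S i)) /\
  (forall i j, i != j -> \rank (S i :&: S j)%MS = 0%N).

(* W_i = (S_i ; S_{i+1}), indices taken cyclically (ordS). *)
Definition Wmx (F : finFieldType) (k : nat)
  (S : 'I_(#|F| ^ k).+1 -> 'M[F]_(k, k + k)) (i : 'I_(#|F| ^ k).+1)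
  : 'M[F]_(k + k, k + k) := col_mx (S i) (S (ordS i)).

Definition first_rows (F : fieldType) (m n : nat) (W : 'M[F]_(m, n)) (j : nat)
  : 'M[F]_(m, n) := \matrix_(r < m, c < n) (if (r < j)%N then W r c else 0).

Definition flagC (F : finFieldType) (k : nat)
  (S : 'I_(#|F| ^ k).+1 -> 'M[F]_(k, k + k)) (i : 'I_(#|F| ^ k).+1) (j : nat)
  : 'M[F]_(k + k, k + k) := first_rows (Wmx S i) j.

(* Main.v *)
Require Import Defs.
From mathcomp Require Import all_boot all_order all_algebra.
Import GRing.Theory.
From mathcomp Require Import zify.
Open Scope ring_scope.

Lemma cap_sum_bound (F : fieldType) (n m1 m2 m3 : nat)
  (U : 'M[F]_(m1, n)) (A : 'M[F]_(m2, n)) (W : 'M[F]_(m3, n)) :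
  (\rank ((U + A) :&: W)%MS <= \rank (U :&: W)%MS + \rank A)%N.
Proof.
set P := ((U + A) :&: W)%MS.
have E := mxrank_sum_cap P U.
have h1 : (\rank (P + U)%MS <= \rank U + \rank A)%N.
  apply: (leq_trans _ (mxrank_adds_leqif U A).1).
  apply: mxrankS; rewrite addsmx_sub; apply/andP; split.
    by apply: capmxSl.
  by apply: addsmxSl.
have h2 : (\rank (P :&: U)%MS <= \rank (U :&: W)%MS)%N.
  apply: mxrankS; rewrite sub_capmx; apply/andP; split; first exact: capmxSr.
  apply: submx_trans (capmxSl _ _) _; exact: capmxSr.
lia.
Qed.

Lemma first_rows_pid (F : fieldType) (m n : nat) (B : 'M[F]_(m, n)) (j : nat) :
  first_rows B j = pid_mx j *m B.
Proof.
apply/matrixP => r c; rewrite !mxE (bigD1 r) //= big1 ?addr0.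
  rewrite !mxE eqxx /=; case: (r < j)%N; by rewrite ?mul1r ?mul0r.
move=> s Hs; rewrite !mxE; case: eqP => [/val_inj E|]; last by rewrite mul0r.
by rewrite E eqxx in Hs.
Qed.

Lemma rank_first_rows (F : fieldType) (m n : nat) (B : 'M[F]_(m, n)) (j : nat) :
  (\rank (first_rows B j) <= j)%N.
Proof.
rewrite first_rows_pid; apply: leq_trans (mxrankM_maxl _ _) _.
case: (leqP j m) => Hj; first by rewrite rank_pid_mx.
by apply: leq_trans (rank_leq_row _) (ltnW Hj).
Qed.

Lemma first_rows_col (F : fieldType) (k1 k2 n : nat) (A : 'M[F]_(k1, n))
  (B : 'M[F]_(k2, n)) (j : nat) : (k1 <= j)%N ->
  first_rows (col_mx A B) j = col_mx A (first_rows B (j - k1)).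
Proof.
move=> Hj; apply/matrixP => r c; rewrite !mxE.
case: splitP => r' Hr; rewrite ?mxE Hr.
  by have -> : (r' < j)%N by apply: leq_trans (ltn_ord r') Hj.
by congr (if _ then _ else _); lia.
Qed.

Close Scope ring_scope.

Theorem proposition4p13 (F : finFieldType) (k : nat)
  (S : 'I_(#|F| ^ k).+1 -> 'M[F]_(k, k + k))
  (a : 'I_(#|F| ^ k).+1) (X : nat -> 'M[F]_(k + k)) (i : nat) :
  (2 <= k)%N ->
  is_spread S ->
  (forall j, (1 <= j <= (k + k).-1)%N -> (X j <= flagC S a j)%MS) ->
  (forall j, (1 <= j <= k)%N -> \rank (X j) = 0%N) ->
  (k < i <= (k + k).-1)%N ->
  (2 * (i - k) < \rank (X i))%N ->
  (forall j, (k < j < i)%N -> (\rank (X j) <= 2 * (j - k))%N) ->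
  (X i <= flagC S a i)%MS /\
  (forall b : 'I_(#|F| ^ k).+1, (X i <= flagC S b i)%MS ->
     forall j, (1 <= j <= (k + k).-1)%N -> (flagC S b j == flagC S a j)%MS).
Proof.
move=> Hk [Hfree Hsp] HX _ Hi Hr _.
have Hi1 : (1 <= i <= (k + k).-1)%N by lia.
have Ha := HX i Hi1.
split => // b Hb j Hj.
case: (eqVneq b a) => [->|Hne]; first by rewrite !submx_refl.
exfalso.
have Hki : (k <= i)%N by lia.
move: Ha Hb; rewrite /flagC /Wmx !first_rows_col // -!addsmxE => Ha Hb.
set Ta := first_rows (S (ordS a)) (i - k) in Ha.
set Tb := first_rows (S (ordS b)) (i - k) in Hb.
have H1 : (\rank (X i) <= \rank ((S a + Ta) :&: (S b + Tb))%MS)%N.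
  by apply: mxrankS; rewrite sub_capmx Ha Hb.
have H2 := @cap_sum_bound _ _ _ _ _ (S a) Ta (S b + Tb)%MS.
have H3 := @cap_sum_bound _ _ _ _ _ (S b) Tb (S a).
rewrite capmxC in H3.
have H4 := Hsp b a Hne.
have H5 := @rank_first_rows _ _ _ (S (ordS a)) (i - k).
have H6 := @rank_first_rows _ _ _ (S (ordS b)) (i - k).
rewrite -/Ta in H5; rewrite -/Tb in H6.
lia.
Qed.
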